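(* Let $n\ge2$ and let $\boldsymbol x^*$ be a pure Nash equilibrium of $\mathcal L(n,S)$. If player $i$ is $\boldsymbol x^*$-balanced, then \[ \rho_i(\boldsymbol x^* )\le\rho_j(\boldsymbol x^* )\quad\text{for all } j\in N. \]
   Context: Network: $(V,E)$ is a finite connected graph with no vertex of degree $2$; each edge $e$ has a length $\lambda(e)>0$. $S$ is the metric measure space obtained by identifying each edge with a segment of length $\lambda(e)$, with length measure $\lambda$ and shortest-path distance $d$. Vertices have their graph degree, and points in the interior of an edge have degree $2$. Location game $\mathcal L(n,S)$ with player set $N=\{1,\dots,n\}$: each player chooses a point of $S$. Consumers are distributed according to $\lambda$, and each shops at a closest occupied location. Consumers equidistant from several closest occupied locations are split equally among those locations, and the share of a location is split equally among the players located there. The payoff $\rho_i(\boldsymbol x)$ is the mass of consumers attracted by player $i$. Nash equilibria are pure. For a profile $\boldsymbol x$ and $w\in S$: if $\operatorname{card}\{i: x_i=w\}=\operatorname{degree}(w)$, then every player located at $w$ is called $\boldsymbol x$-balanced and $w$ is called $\boldsymbol x$-saturated. *)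

(* Defs.v *)
From HB Require Import structures.
From mathcomp Require Import all_boot.
From Stdlib Require Import Reals ClassicalEpsilon.
Set Implicit Arguments. Unset Strict Implicit. Unset Printing Implicit Defensive.

Local Open Scope R_scope.

(* A point of S is either a vertex, or an interior point of an edge [e],
   given by its distance [t] (0 < t < len e) from the endpoint [src e]. *)
Inductive point (V E : Type) := PV of V | PE of E & R.
Arguments PV {V E}. Arguments PE {V E}.

Section Net.
Context {V E : finType} (src tgt : E -> V) (len : E -> R).

Definition point_eqb (p q : point V E) : bool :=
  match p, q with
  | PV u, PV v => u == v
  | PE e t, PE f s => (e == f) && (if Req_EM_T t s then true else false)
  | _, _ => false
  end.

Lemma point_eqbP : Equality.axiom point_eqb.
Proof.
move=> [u|e t] [v|f s] /=; try by constructor.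
- by apply: (iffP eqP) => [->|[]].
- case: (Req_EM_T t s) => [ts|ne]; rewrite ?andbT ?andbF.
  + by subst s; apply: (iffP eqP) => [->|[]].
  + by constructor => -[].
Qed.

End Net.

HB.instance Definition _ (V E : finType) :=
  hasDecEq.Build (point V E) (@point_eqbP V E).

Section Game.
Context {V E : finType} (src tgt : E -> V) (len : E -> R).

Inductive walk : V -> V -> seq E -> Prop :=
| walk_nil v : walk v v [::]
| walk_fwd e u s : walk (tgt e) u s -> walk (src e) u (e :: s)
| walk_bwd e u s : walk (src e) u s -> walk (tgt e) u (e :: s).

Definition wlen (s : seq E) : R := foldr (fun e r => len e + r) 0 s.

Definition connected : Prop := forall u v, exists s, walk u v s.

Definition dV (u v : V) : R :=
  epsilon (inhabits 0)
    (fun r => (exists s, walk u v s /\ wlen s = r) /\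
              (forall s, walk u v s -> r <= wlen s)).

(* shortest-path distance d on S *)
Definition dist (p q : point V E) : R :=
  match p, q with
  | PV u, PV v => dV u v
  | PV u, PE f s => Rmin (dV u (src f) + s) (dV u (tgt f) + (len f - s))
  | PE e t, PV v => Rmin (t + dV (src e) v) ((len e - t) + dV (tgt e) v)
  | PE e t, PE f s =>
      let m := Rmin
        (Rmin (t + dV (src e) (src f) + s)
              (t + dV (src e) (tgt f) + (len f - s)))
        (Rmin ((len e - t) + dV (tgt e) (src f) + s)
              ((len e - t) + dV (tgt e) (tgt f) + (len f - s))) in
      if e == f then Rmin (Rabs (t - s)) m else m
  end.

Definition valid_point (p : point V E) : Prop :=
  match p with PV _ => True | PE e t => 0 < t < len e end.

Definition vdeg (v : V) : nat := #|[pred e : E | (src e == v) || (tgt e == v)]|.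
Definition degree (p : point V E) : nat :=
  match p with PV v => vdeg v | PE _ _ => 2%nat end.

Definition pt_on (e : E) (t : R) : point V E :=
  if Req_EM_T t 0 then PV (src e)
  else if Req_EM_T t (len e) then PV (tgt e) else PE e t.

Definition Rleb (a b : R) : bool := if Rle_dec a b then true else false.

Variable n : nat.
Implicit Types (x : 'I_n -> point V E) (z : point V E) (i j : 'I_n).

Definition closest x z j : bool := [forall k, Rleb (dist z (x j)) (dist z (x k))].

Definition closest_locs x z : seq (point V E) :=
  undup [seq x j | j <- enum 'I_n & closest x z j].

Definition nb_at x (w : point V E) : nat := #|[pred j | x j == w]|.

Definition share x i z : R :=
  if closest x z i then / INR (size (closest_locs x z)) * / INR (nb_at x (x i))
  else 0.

(* Riemann integral (value of the integral whenever f is integrable) *)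
Definition RInt (f : R -> R) (a b : R) : R :=
  epsilon (inhabits 0)
    (fun r => exists pr : Riemann_integrable f a b, RiemannInt pr = r).

Definition payoff x i : R :=
  \big[Rplus/0]_(e : E) RInt (fun t => share x i (pt_on e t)) 0 (len e).

Definition upd x i (y : point V E) : 'I_n -> point V E :=
  fun j => if j == i then y else x j.

Definition valid_profile x : Prop := forall j, valid_point (x j).

Definition nash x : Prop :=
  valid_profile x /\
  forall i y, valid_point y -> payoff (upd x i y) i <= payoff x i.

Definition balanced x i : Prop := nb_at x (x i) = degree (x i).

End Game.

Definition network {V E : finType} (src tgt : E -> V) (len : E -> R) : Prop :=
  (forall e, 0 < len e) /\
  (forall e, src e <> tgt e) /\
  (forall e f, ((src e = src f /\ tgt e = tgt f) \/ (src e = tgt f /\ tgt e = src f)) -> e = f) /\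
  connected src tgt /\
  (forall v, vdeg src tgt v <> 2%nat).

(* Main.v *)
Require Import Defs.
From HB Require Import structures.
From mathcomp Require Import all_boot.
From Stdlib Require Import Reals Lra Lia ClassicalEpsilon Classical FunctionalExtensionality RList.
From Stdlib Require ZArith.
Set Implicit Arguments. Unset Strict Implicit. Unset Printing Implicit Defensive.
Local Open Scope R_scope.

Lemma RInt_val f a b (pr : Riemann_integrable f a b) : RInt f a b = RiemannInt pr.
Proof.
unfold RInt.
have H : exists r, exists pr : Riemann_integrable f a b, RiemannInt pr = r.
  by exists (RiemannInt pr); exists pr.
have [pr' <-] := epsilon_spec (inhabits 0) _ H.
apply: RiemannInt_P5.
Qed.

Definition integ f a b := exists pr : Riemann_integrable f a b, True.

Lemma RInt_le f g a b : a <= b -> integ f a b -> integ g a b ->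
  (forall t, a < t < b -> f t <= g t) -> RInt f a b <= RInt g a b.
Proof.
move=> ab [pf _] [pg _] H; rewrite (RInt_val pf) (RInt_val pg).
exact: RiemannInt_P19.
Qed.

Lemma integ_add f g a b : integ f a b -> integ g a b -> integ (fun t => f t + g t) a b.
Proof.
move=> [pf _] [pg _]; have pr := RiemannInt_P10 1 pf pg.
have -> : (fun t => f t + g t) = (fun t => f t + 1 * g t).
  by apply: functional_extensionality => t; ring.
by exists pr.
Qed.

Lemma RInt_add f g a b : integ f a b -> integ g a b ->
  RInt (fun t => f t + g t) a b = RInt f a b + RInt g a b.
Proof.
move=> [pf _] [pg _]; have pr := RiemannInt_P10 1 pf pg.
have -> : (fun t => f t + g t) = (fun t => f t + 1 * g t).
  by apply: functional_extensionality => t; ring.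
rewrite (RInt_val pr) (RInt_val pf) (RInt_val pg) (RiemannInt_P13 pf pg pr); ring.
Qed.

Lemma integ_cst c a b : integ (fun _ => c) a b.
Proof. by exists (RiemannInt_P14 a b c). Qed.

Lemma integ_scal c f a b : integ f a b -> integ (fun t => c * f t) a b.
Proof.
move=> [pf _]; have pr := RiemannInt_P10 c (RiemannInt_P14 a b 0) pf.
have -> : (fun t => c * f t) = (fun t => fct_cte 0 t + c * f t).
  by apply: functional_extensionality => t; unfold fct_cte; ring.
by exists pr.
Qed.

Lemma RInt_scal c f a b : integ f a b -> RInt (fun t => c * f t) a b = c * RInt f a b.
Proof.
move=> [pf _]; have p0 := RiemannInt_P14 a b 0.
have pr := RiemannInt_P10 c p0 pf.
have -> : (fun t => c * f t) = (fun t => fct_cte 0 t + c * f t).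
  by apply: functional_extensionality => t; unfold fct_cte; ring.
rewrite (RInt_val pr) (RInt_val pf) (RiemannInt_P13 p0 pf pr) RiemannInt_P15; ring.
Qed.

Lemma RInt_cst c a b : RInt (fun _ => c) a b = c * (b - a).
Proof. by rewrite (RInt_val (RiemannInt_P14 a b c)) RiemannInt_P15. Qed.

Lemma RInt_cst_bound f a b u : a <= b -> integ f a b ->
  (forall t, a < t < b -> f t <= u) -> RInt f a b <= u * (b - a).
Proof.
move=> ab If H; rewrite -RInt_cst; apply: RInt_le => //; exact: integ_cst.
Qed.

Lemma integ_split f a b c : integ f a b -> integ f b c -> integ f a c.
Proof. by move=> [p1 _] [p2 _]; exists (RiemannInt_P24 p1 p2). Qed.

Lemma RInt_chasles f a b c : a <= b <= c -> integ f a c ->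
  integ f a b /\ integ f b c /\ RInt f a c = RInt f a b + RInt f b c.
Proof.
move=> hb [p _].
have p1 := RiemannInt_P22 p hb. have p2 := RiemannInt_P23 p hb.
split; first by exists p1. split; first by exists p2.
by rewrite (RInt_val p) (RInt_val p1) (RInt_val p2) (RiemannInt_P26 p1 p2 p).
Qed.

Definition PC {T} (a b : R) (P : list R) (f : R -> T) :=
  forall t1 t2, a < t1 -> t1 <= t2 -> t2 < b ->
    (forall p, List.In p P -> p < t1 \/ t2 < p) -> f t1 = f t2.

Lemma PC_mono {T} a b P Q (f : R -> T) : PC a b P f ->
  (forall p, List.In p P -> List.In p Q) -> PC a b Q f.
Proof. move=> H HPQ t1 t2 h1 h2 h3 H4; apply: H => // p /HPQ; exact: H4. Qed.

Lemma PC_map {T U} a b P (f : R -> T) (F : T -> U) : PC a b P f -> PC a b P (fun t => F (f t)).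
Proof. by move=> H t1 t2 h1 h2 h3 h4; rewrite (H t1 t2). Qed.

Lemma PC_comb {T U W} a b P Q (f : R -> T) (g : R -> U) (F : T -> U -> W) :
  PC a b P f -> PC a b Q g -> PC a b (P ++ Q)%list (fun t => F (f t) (g t)).
Proof.
move=> Hf Hg t1 t2 h1 h2 h3 h4.
rewrite (Hf t1 t2) ?(Hg t1 t2) // => p hp; apply: h4; apply List.in_or_app; tauto.
Qed.

Lemma PC_ext {T} a b P (f g : R -> T) : (forall t, a < t < b -> f t = g t) ->
  PC a b P g -> PC a b P f.
Proof.
move=> E H t1 t2 h1 h2 h3 h4; rewrite !E; try lra; exact: H.
Qed.

Lemma integ_const_open f a b : a <= b ->
  (forall t1 t2, a < t1 -> t1 <= t2 -> t2 < b -> f t1 = f t2) -> integ f a b.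
Proof.
move=> ab H; case: (Req_dec a b) => [<-|ne].
  by exists (RiemannInt_P7 f a).
have lt : a < b by lra.
pose c := f ((a+b)/2).
have Hc : forall t, a < t < b -> f t = c.
  move=> t ht; rewrite /c.
  case: (Rle_dec t ((a+b)/2)) => h; [apply: H|symmetry; apply: H]; lra.
have ad : adapted_couple f a b (a :: b :: nil) (c :: nil).
  unfold adapted_couple; repeat split.
  - unfold ordered_Rlist; intros i0 Hi; simpl in Hi; inversion Hi;
      [ simpl; lra | elim (Nat.nle_succ_0 _ H1) ].
  - simpl; unfold Rmin; case (Rle_dec a b); lra.
  - simpl; unfold Rmax; case (Rle_dec a b); lra.
  - intros i0 Hi; simpl in Hi; inversion Hi.
    + unfold constant_D_eq, open_interval; simpl; intros t ht; exact: Hc.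
    + elim (Nat.nle_succ_0 _ H1).
have sf : IsStepFun f a b by exists (a :: b :: nil); exists (c :: nil).
have pr : Riemann_integrable f a b.
  move=> eps; exists (mkStepFun sf); exists (mkStepFun (StepFun_P4 a b 0)); split.
  - move=> t _ /=; rewrite /fct_cte Rminus_diag Rabs_R0; lra.
  - rewrite StepFun_P18 Rmult_0_l Rabs_R0; exact: cond_pos.
by exists pr.
Qed.

Lemma PC_integ_aux (N : nat) : forall (P : list R) f a b, (length P <= N)%coq_nat ->
  a <= b -> PC a b P f -> integ f a b.
Proof.
elim: N => [|N IH] P f a b hl ab H.
- apply: integ_const_open => // t1 t2 h1 h2 h3; apply: H => // p hp.
  destruct P; [by [] | simpl in hl; lia].
- case: (classic (exists p, List.In p P /\ a < p < b)) => [[p [hp hpab]]|hno].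
  + pose P' := List.filter (fun q => if Req_EM_T q p then false else true) P.
    have hl' : (length P' < length P)%coq_nat.
      rewrite /P'; clear -hp; elim: P hp => [//|q P IHP] /= [->|hp].
      * case: (Req_EM_T p p) => // _ /=.
        have := List.filter_length_le (fun q => if Req_EM_T q p then false else true) P; lia.
      * case: (Req_EM_T q p) => _ /=; have := IHP hp; lia.
    have inP' : forall q, List.In q P -> q <> p -> List.In q P'.
      move=> q hq nq; apply/List.filter_In; split => //; by case: (Req_EM_T q p).
    apply: (integ_split (b := p)); apply: (IH P'); try lia; try lra.
    * move=> t1 t2 h1 h2 h3 h4; apply: H; try lra.
      move=> q hq; case: (Req_EM_T q p) => [->|nq]; first by right; lra.
      exact: h4 (inP' q hq nq).
    * move=> t1 t2 h1 h2 h3 h4; apply: H; try lra.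
      move=> q hq; case: (Req_EM_T q p) => [->|nq]; first by left; lra.
      exact: h4 (inP' q hq nq).
  + apply: integ_const_open => // t1 t2 h1 h2 h3; apply: H => // q hq.
    case: (Rle_dec q a) => ?; first by left; lra.
    case: (Rle_dec b q) => ?; first by right; lra.
    by exfalso; apply: hno; exists q; split => //; lra.
Qed.

Lemma PC_integ P f a b : a <= b -> PC a b P f -> integ f a b.
Proof. move=> ab; exact: (@PC_integ_aux (length P) P). Qed.
Inductive fexp := Aff of R & R | Min of fexp & fexp | Max of fexp & fexp.

Fixpoint feval (f : fexp) (t : R) : R :=
  match f with
  | Aff al be => al * t + be
  | Min f g => Rmin (feval f t) (feval g t)
  | Max f g => Rmax (feval f t) (feval g t)
  end.

Lemma Rleb_iff u v : Rleb u v = true <-> u <= v.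
Proof. rewrite /Rleb; case: Rle_dec => //. Qed.

Lemma Rleb_false u v : Rleb u v = false <-> v < u.
Proof. rewrite /Rleb; case: Rle_dec => h; split => //; lra. Qed.

Lemma Rleb_minl u v w : Rleb (Rmin u v) w = Rleb u w || Rleb v w.
Proof. rewrite /Rleb /Rmin; repeat case: Rle_dec => //=; lra. Qed.
Lemma Rleb_maxl u v w : Rleb (Rmax u v) w = Rleb u w && Rleb v w.
Proof. rewrite /Rleb /Rmax; repeat case: Rle_dec => //=; lra. Qed.
Lemma Rleb_minr u v w : Rleb w (Rmin u v) = Rleb w u && Rleb w v.
Proof. rewrite /Rleb /Rmin; repeat case: Rle_dec => //=; lra. Qed.
Lemma Rleb_maxr u v w : Rleb w (Rmax u v) = Rleb w u || Rleb w v.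
Proof. rewrite /Rleb /Rmax; repeat case: Rle_dec => //=; lra. Qed.

Lemma aff_PC a b a1 b1 a2 b2 : exists P,
  PC a b P (fun t => Rleb (a1 * t + b1) (a2 * t + b2)).
Proof.
case: (Req_dec a1 a2) => [<-|ne].
  exists nil => t1 t2 _ _ _ _; rewrite /Rleb.
  by do 2! case: Rle_dec => //= ?; lra.
pose r := (b2 - b1) / (a1 - a2).
have hr : r * (a1 - a2) = b2 - b1 by rewrite /r; field; lra.
have key : forall t, a1 * t + b1 - (a2 * t + b2) = (a1 - a2) * (t - r).
  move=> t; have -> : (a1 - a2) * (t - r) = (a1 - a2) * t - r * (a1 - a2) by ring.
  rewrite hr; ring.
exists (r :: nil) => t1 t2 h1 h2 h3 h4.
have k1 := key t1; have k2 := key t2.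
have [h|h] := h4 r (or_introl erefl); rewrite /Rleb;
  do 2! case: Rle_dec => //= ?; case: (Rlt_le_dec a1 a2) => ?.
all: first
  [ have : (a1 - a2) * (t1 - r) < 0 by apply: Rmult_neg_pos; lra
  | have : (a1 - a2) * (t1 - r) > 0 by apply: Rmult_pos_pos; lra
  | have : (a1 - a2) * (t1 - r) > 0 by apply: Rmult_neg_neg; lra
  | have : (a1 - a2) * (t1 - r) < 0 by apply: Rmult_pos_neg; lra
  | idtac ];
  first
  [ have : (a1 - a2) * (t2 - r) < 0 by apply: Rmult_neg_pos; lra
  | have : (a1 - a2) * (t2 - r) > 0 by apply: Rmult_pos_pos; lra
  | have : (a1 - a2) * (t2 - r) > 0 by apply: Rmult_neg_neg; lra
  | have : (a1 - a2) * (t2 - r) < 0 by apply: Rmult_pos_neg; lra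
  | idtac ]; lra.
Qed.

Lemma fexp_PC a b (f g : fexp) : exists P,
  PC a b P (fun t => Rleb (feval f t) (feval g t)).
Proof.
elim: f g => [a1 b1|f1 IH1 f2 IH2|f1 IH1 f2 IH2] g.
- elim: g => [a2 b2|g1 [P1 H1] g2 [P2 H2]|g1 [P1 H1] g2 [P2 H2]].
  + exact: aff_PC.
  + exists (P1 ++ P2)%list; apply: (PC_ext (g := fun t => Rleb (feval (Aff a1 b1) t) (feval g1 t) && Rleb (feval (Aff a1 b1) t) (feval g2 t))).
      by move=> t _ /=; rewrite Rleb_minr.
    exact: PC_comb.
  + exists (P1 ++ P2)%list; apply: (PC_ext (g := fun t => Rleb (feval (Aff a1 b1) t) (feval g1 t) || Rleb (feval (Aff a1 b1) t) (feval g2 t))).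
      by move=> t _ /=; rewrite Rleb_maxr.
    exact: PC_comb.
- have [P1 H1] := IH1 g; have [P2 H2] := IH2 g.
  exists (P1 ++ P2)%list; apply: (PC_ext (g := fun t => Rleb (feval f1 t) (feval g t) || Rleb (feval f2 t) (feval g t))).
    by move=> t _ /=; rewrite Rleb_minl.
  exact: PC_comb.
- have [P1 H1] := IH1 g; have [P2 H2] := IH2 g.
  exists (P1 ++ P2)%list; apply: (PC_ext (g := fun t => Rleb (feval f1 t) (feval g t) && Rleb (feval f2 t) (feval g t))).
    by move=> t _ /=; rewrite Rleb_maxl.
  exact: PC_comb.
Qed.

Lemma PC_fun_list (A : eqType) (T : Type) a b (f : A -> R -> T) (l : seq A) :
  (forall x, exists P, PC a b P (f x)) -> exists P, forall x, x \in l -> PC a b P (f x).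
Proof.
move=> H; elim: l => [|y l [P HP]]; first by exists nil.
have [Q HQ] := H y; exists (P ++ Q)%list => x; rewrite in_cons => /orP [/eqP ->|hx].
  apply: PC_mono HQ _ => p hp; apply: List.in_or_app; tauto.
apply: PC_mono (HP x hx) _ => p hp; apply: List.in_or_app; tauto.
Qed.

Lemma PC_fun (A : finType) (T : Type) a b (f : A -> R -> T) :
  (forall x, exists P, PC a b P (f x)) -> exists P, PC a b P (fun t x => f x t).
Proof.
move=> H; have [P HP] := PC_fun_list (enum A) H; exists P => t1 t2 h1 h2 h3 h4.
apply: functional_extensionality => x; apply: (HP x) => //; by rewrite mem_enum.
Qed.

Section Walks.
Variables (V E : finType) (src tgt : E -> V) (len : E -> R).
Hypothesis Hlen : forall e, 0 < len e.
Hypothesis Hconn : connected src tgt.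

Lemma wlen_cons e s : wlen len (e :: s) = len e + wlen len s.
Proof. by []. Qed.

Lemma wlen_ge0 s : 0 <= wlen len s.
Proof. elim: s => [|e s IH] /=; [lra | have := Hlen e; rewrite /wlen /= in IH *; lra]. Qed.

Lemma lmin_ex (l : seq E) : exists m, 0 < m /\ forall e, e \in l -> m <= len e.
Proof.
elim: l => [|e l [m [hm H]]]; first by exists 1; split => //; lra.
exists (Rmin m (len e)); split; first by apply: Rmin_glb_lt => //.
move=> f; rewrite in_cons => /orP [/eqP ->|hf]; first exact: Rmin_r.
apply: Rle_trans (Rmin_l _ _) (H f hf).
Qed.

Lemma wlen_size m s : (forall e, m <= len e) -> INR (size s) * m <= wlen len s.
Proof.
move=> H; elim: s => [|e s IH]; first by rewrite /= Rmult_0_l; lra.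
have -> : size (e :: s) = S (size s) by [].
rewrite S_INR wlen_cons; have := H e; lra.
Qed.

Fixpoint seqs (k : nat) : seq (seq E) :=
  if k is k'.+1 then [::] :: [seq e :: s | e <- enum E, s <- seqs k'] else [:: [::]].

Lemma mem_seqs k s : (size s <= k)%nat -> s \in seqs k.
Proof.
elim: k s => [|k IH] [|e s] hs; rewrite /= ?in_cons ?eqxx //.
apply/orP; right; apply: allpairs_f; [by rewrite mem_enum | exact: IH].
Qed.

Lemma list_min (T : eqType) (l : seq T) (P : T -> Prop) (F : T -> R) :
  (exists s, s \in l /\ P s) -> exists m, m \in l /\ P m /\ forall s, s \in l -> P s -> F m <= F s.
Proof.
elim: l => [[s [//]]|a l IH] [s [hs Ps]].
case: (classic (exists s, s \in l /\ P s)) => [ex|nex].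
- have [m [hm [Pm Hm]]] := IH ex.
  case: (classic (P a)) => Pa.
  + case: (Rle_dec (F a) (F m)) => h.
    * exists a; split; first by rewrite in_cons eqxx.
      split => // s' ; rewrite in_cons => /orP [/eqP ->|hs'] Ps'; first lra.
      apply: Rle_trans h (Hm _ hs' Ps').
    * exists m; split; first by rewrite in_cons hm orbT.
      split => // s'; rewrite in_cons => /orP [/eqP ->|hs'] Ps'; first lra.
      exact: Hm.
  + exists m; split; first by rewrite in_cons hm orbT.
    split => // s'; rewrite in_cons => /orP [/eqP ->|hs'] Ps' //; exact: Hm.
- have Pa : P a.
    move: hs; rewrite in_cons => /orP [/eqP <-//|hs]; by exfalso; apply: nex; exists s.
  exists a; split; first by rewrite in_cons eqxx.
  split => // s'; rewrite in_cons => /orP [/eqP ->|hs'] Ps'; first lra.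
  by exfalso; apply: nex; exists s'.
Qed.

Lemma dV_spec u v :
  (exists s, walk src tgt u v s /\ wlen len s = dV src tgt len u v) /\
  (forall s, walk src tgt u v s -> dV src tgt len u v <= wlen len s).
Proof.
pose P := fun r => (exists s, walk src tgt u v s /\ wlen len s = r) /\
              (forall s, walk src tgt u v s -> r <= wlen len s).
suff HP : exists r, P r by exact: (epsilon_spec (inhabits 0) P HP).
have [s0 w0] := Hconn u v.
have [m [hm Hm]] := lmin_ex (enum E).
have Hm' : forall e, m <= len e by move=> e; apply: Hm; rewrite mem_enum.
have [K HK] : exists K : nat, wlen len s0 < INR K * m.
  have [h _] := archimed (wlen len s0 / m).
  exists (Z.to_nat (up (wlen len s0 / m))).
  have h0 : (0 <= up (wlen len s0 / m))%Z.
    apply: le_IZR; have := wlen_ge0 s0; have : 0 <= wlen len s0 / m.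
      apply: Rmult_le_pos; [exact: wlen_ge0| apply: Rlt_le; exact: Rinv_0_lt_compat].
    lra.
  rewrite INR_IZR_INZ Znat.Z2Nat.id //.
  have e1 : wlen len s0 / m * m = wlen len s0 by field; lra.
  have := Rmult_lt_compat_r m _ _ hm h; lra.
have Hbig : forall s, (K < size s)%nat -> wlen len s0 < wlen len s.
  move=> s hlt; have := wlen_size s Hm'.
  have h1 : INR K <= INR (size s) by apply: le_INR; apply/leP; exact: ltnW.
  have : INR K * m <= INR (size s) * m by apply: Rmult_le_compat_r; lra.
  lra.
have hs0 : (size s0 <= K)%nat.
  case: (leqP (size s0) K) => // hlt; have := Hbig _ hlt; lra.
have [s1 [hs1 [w1 Hmin]]] := @list_min _ (seqs K) (walk src tgt u v) (wlen len)
   (ex_intro _ s0 (conj (mem_seqs hs0) w0)).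
exists (wlen len s1); split; first by exists s1.
move=> s ws; case: (leqP (size s) K) => hs; first exact: Hmin (mem_seqs hs) ws.
apply: Rle_trans (Hmin _ (mem_seqs hs0) w0) _.
have := Hbig _ hs; lra.
Qed.


Notation dV' := (dV src tgt len).

Lemma dV_le u v s : walk src tgt u v s -> dV' u v <= wlen len s.
Proof. exact: (proj2 (dV_spec u v)). Qed.

Lemma dV_ge0 u v : 0 <= dV' u v.
Proof. have [[s [_ <-]] _] := dV_spec u v; exact: wlen_ge0. Qed.

Lemma dV_refl v : dV' v v = 0.
Proof. have := dV_le (walk_nil src tgt v); have := dV_ge0 v v; rewrite /wlen /=; lra. Qed.

Lemma walk_nil_eq u v : walk src tgt u v [::] -> u = v.
Proof. by move=> h; inversion h. Qed.

Lemma wlen_rcons s f : wlen len (rcons s f) = wlen len s + len f.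
Proof.
elim: s => [|e s IH]; first by rewrite /wlen /=; ring.
by rewrite rcons_cons !wlen_cons IH; ring.
Qed.

Lemma walk_last u v s : walk src tgt u v s -> s <> [::] ->
  exists s' f, s = rcons s' f /\
    ((walk src tgt u (src f) s' /\ tgt f = v) \/ (walk src tgt u (tgt f) s' /\ src f = v)).
Proof.
elim=> {u v s} [//|e u s w IH _|e u s w IH _].
- case: s w IH => [|a s] w IH.
    exists [::], e; split => //; left; split; [exact: walk_nil | exact: walk_nil_eq w].
  have [s' [f [-> H]]] := IH ltac:(by []).
  exists (e :: s'), f; split => //.
  by case: H => [[w1 h]|[w1 h]]; [left|right]; split => //; apply: walk_fwd.
- case: s w IH => [|a s] w IH.
    exists [::], e; split => //; right; split; [exact: walk_nil | exact: walk_nil_eq w].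
  have [s' [f [-> H]]] := IH ltac:(by []).
  exists (e :: s'), f; split => //.
  by case: H => [[w1 h]|[w1 h]]; [left|right]; split => //; apply: walk_bwd.
Qed.

Lemma dV_last u v : u <> v -> exists f w, dV' u w + len f <= dV' u v /\ ((src f = v /\ tgt f = w) \/ (tgt f = v /\ src f = w)).
Proof.
move=> uv; have [[s [ws <-]] _] := dV_spec u v.
have sn : s <> [::] by move=> E0; subst s; apply: uv; exact: walk_nil_eq ws.
have [s' [f [-> [[w1 h]|[w1 h]]]]] := walk_last ws sn.
- exists f, (src f); rewrite wlen_rcons; split; last by right.
  have := dV_le w1; lra.
- exists f, (tgt f); rewrite wlen_rcons; split; last by left.
  have := dV_le w1; lra.
Qed.
End Walks.

Lemma Rmin_le_or a b c : Rmin a b <= c -> a <= c \/ b <= c.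
Proof. rewrite /Rmin; case: Rle_dec => _; tauto. Qed.

Section Geo.
Variables (V E : finType) (src tgt : E -> V) (len : E -> R).
Hypothesis Hlen : forall e, 0 < len e.
Hypothesis Hconn : connected src tgt.
Hypothesis Hloop : forall e, src e <> tgt e.

Notation pdist := (Defs.dist src tgt len).
Notation dV' := (dV src tgt len).

Lemma KB e t f s u o : (u = src e /\ o = t) \/ (u = tgt e /\ o = len e - t) ->
  pdist (PE e t) (PE f s) <= o + dV' u (src f) + s /\
  pdist (PE e t) (PE f s) <= o + dV' u (tgt f) + (len f - s).
Proof.
move=> H.
pose m := Rmin (Rmin (t + dV' (src e) (src f) + s) (t + dV' (src e) (tgt f) + (len f - s)))
   (Rmin (len e - t + dV' (tgt e) (src f) + s) (len e - t + dV' (tgt e) (tgt f) + (len f - s))).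
have hm2 : pdist (PE e t) (PE f s) <= m.
  rewrite /Defs.dist /m; case: (e == f); [exact: Rmin_r| exact: Rle_refl].
have h1 := Rmin_l (Rmin (t + dV' (src e) (src f) + s) (t + dV' (src e) (tgt f) + (len f - s)))
   (Rmin (len e - t + dV' (tgt e) (src f) + s) (len e - t + dV' (tgt e) (tgt f) + (len f - s))).
have h2 := Rmin_r (Rmin (t + dV' (src e) (src f) + s) (t + dV' (src e) (tgt f) + (len f - s)))
   (Rmin (len e - t + dV' (tgt e) (src f) + s) (len e - t + dV' (tgt e) (tgt f) + (len f - s))).
have h3 := Rmin_l (t + dV' (src e) (src f) + s) (t + dV' (src e) (tgt f) + (len f - s)).
have h4 := Rmin_r (t + dV' (src e) (src f) + s) (t + dV' (src e) (tgt f) + (len f - s)).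
have h5 := Rmin_l (len e - t + dV' (tgt e) (src f) + s) (len e - t + dV' (tgt e) (tgt f) + (len f - s)).
have h6 := Rmin_r (len e - t + dV' (tgt e) (src f) + s) (len e - t + dV' (tgt e) (tgt f) + (len f - s)).
rewrite -/m in h1 h2.
case: H => [[-> ->]|[-> ->]]; split; lra.
Qed.

Lemma KB_abs e t s : pdist (PE e t) (PE e s) <= Rabs (t - s).
Proof. rewrite /Defs.dist eqxx; exact: Rmin_l. Qed.

Definition ydir (v : V) (f : E) (eps : R) : point V E :=
  if src f == v then PE f eps else PE f (len f - eps).

Lemma geo_vertex_aux e t v eps u o : 0 < t < len e -> 0 < eps ->
  (u = src e /\ o = t) \/ (u = tgt e /\ o = len e - t) ->
  eps < o + dV' u v ->
  exists f, ((src f == v) || (tgt f == v)) /\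
    pdist (PE e t) (ydir v f eps) + eps <= o + dV' u v.
Proof.
move=> ht he Huo hlt.
case: (classic (u = v)) => [uv|uv].
- subst v; rewrite dV_refl // in hlt *.
  case: Huo => [[? ?]|[? ?]]; subst u o.
  + exists e; split; first by rewrite eqxx.
    rewrite /ydir eqxx.
    have := KB_abs e t eps; rewrite Rabs_right; lra.
  + exists e; split; first by rewrite eqxx orbT.
    rewrite /ydir.
    have -> : (src e == tgt e) = false by apply/eqP; exact: Hloop.
    have := KB_abs e t (len e - eps); rewrite Rabs_left; lra.
- have [f [w [hw [[hs ht']|[ht' hs]]]]] := dV_last Hlen Hconn uv.
  all: subst v w.
  + exists f; split; first by rewrite eqxx.
    rewrite /ydir eqxx.
    have [_ k] := KB f eps Huo; lra.
  + exists f; split; first by rewrite eqxx orbT.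
    rewrite /ydir.
    have -> : (src f == tgt f) = false by apply/eqP; exact: Hloop.
    have [k _] := KB f (len f - eps) Huo; lra.
Qed.

Lemma geo_vertex e t v eps : 0 < t < len e -> 0 < eps ->
  eps < pdist (PE e t) (PV v) ->
  exists f, ((src f == v) || (tgt f == v)) /\
    pdist (PE e t) (ydir v f eps) + eps <= pdist (PE e t) (PV v).
Proof.
move=> ht he; rewrite {1 3}/Defs.dist /Rmin; case: Rle_dec => _ h.
- apply: (geo_vertex_aux (u := src e) (o := t)) => //; tauto.
- apply: (geo_vertex_aux (u := tgt e) (o := len e - t)) => //; tauto.
Qed.

Lemma geo_int_aux e t e0 s0 eps : 
  let dm := pdist (PE e t) (PE e0 (s0 - eps)) in
  let dp := pdist (PE e t) (PE e0 (s0 + eps)) in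
  Rmin dm dp + eps <=
  Rmin (Rmin (t + dV' (src e) (src e0) + s0) (t + dV' (src e) (tgt e0) + (len e0 - s0)))
       (Rmin (len e - t + dV' (tgt e) (src e0) + s0) (len e - t + dV' (tgt e) (tgt e0) + (len e0 - s0))).
Proof.
move=> dm dp.
have [a1 a2] := KB e0 (s0 - eps) (or_introl (conj erefl erefl) : (src e = src e /\ t = t) \/ _).
have [a3 a4] := KB e0 (s0 + eps) (or_introl (conj erefl erefl) : (src e = src e /\ t = t) \/ _).
have [a5 a6] := KB e0 (s0 - eps) (or_intror (conj erefl erefl) : _ \/ (tgt e = tgt e /\ len e - t = len e - t)).
have [a7 a8] := KB e0 (s0 + eps) (or_intror (conj erefl erefl) : _ \/ (tgt e = tgt e /\ len e - t = len e - t)).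
rewrite -/dm -/dp in a1 a2 a3 a4 a5 a6 a7 a8.
have hmin1 := Rmin_l dm dp; have hmin2 := Rmin_r dm dp.
repeat apply: Rmin_glb; lra.
Qed.

Lemma geo_int e t e0 s0 eps : 0 < t < len e -> 0 < eps ->
  eps < pdist (PE e t) (PE e0 s0) ->
  pdist (PE e t) (PE e0 (s0 - eps)) + eps <= pdist (PE e t) (PE e0 s0) \/
  pdist (PE e t) (PE e0 (s0 + eps)) + eps <= pdist (PE e t) (PE e0 s0).
Proof.
move=> ht he hD.
suff : Rmin (pdist (PE e t) (PE e0 (s0 - eps))) (pdist (PE e t) (PE e0 (s0 + eps))) + eps
        <= pdist (PE e t) (PE e0 s0).
  rewrite /Rmin; case: Rle_dec => _; lra.
have Hm := geo_int_aux e t e0 s0 eps; simpl in Hm.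
case: (e =P e0) => [E0|ne]; last first.
  by rewrite {3}/Defs.dist; have -> : (e == e0) = false by apply/eqP.
subst e0.
set dm := pdist (PE e t) (PE e (s0 - eps)) in Hm *.
set dp := pdist (PE e t) (PE e (s0 + eps)) in Hm *.
move: hD; rewrite {1 2}/Defs.dist eqxx => hD.
apply: Rmin_glb => //.
set M := Rmin (Rmin _ _) _ in hD Hm.
have hab : eps < Rabs (t - s0) by have := Rmin_l (Rabs (t - s0)) M; lra.
have k1 := KB_abs e t (s0 - eps); have k2 := KB_abs e t (s0 + eps).
rewrite -/dm -/dp in k1 k2.
have hmin1 := Rmin_l dm dp; have hmin2 := Rmin_r dm dp.
move: hab k1 k2; rewrite /Rabs; do 3! case: Rcase_abs => ?; lra.
Qed.

Lemma near_vertex e t v eps : pdist (PE e t) (PV v) <= eps -> t <= eps \/ len e - t <= eps.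
Proof.
rewrite /Defs.dist => /Rmin_le_or [h|h].
- have := dV_ge0 Hlen Hconn (src e) v; left; lra.
- have := dV_ge0 Hlen Hconn (tgt e) v; right; lra.
Qed.

Lemma near_int e t e0 s0 eps : 0 < s0 < len e0 -> pdist (PE e t) (PE e0 s0) <= eps ->
  t <= eps \/ len e - t <= eps \/ (e = e0 /\ Rabs (t - s0) <= eps).
Proof.
move=> hs; rewrite /Defs.dist.
have g1 := dV_ge0 Hlen Hconn (src e) (src e0); have g2 := dV_ge0 Hlen Hconn (src e) (tgt e0).
have g3 := dV_ge0 Hlen Hconn (tgt e) (src e0); have g4 := dV_ge0 Hlen Hconn (tgt e) (tgt e0).
case: eqP => [E0|_].
- subst e0; move=> /Rmin_le_or [h|/Rmin_le_or [/Rmin_le_or [h|h]|/Rmin_le_or [h|h]]].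
  + by right; right; split.
  + left; lra.
  + left; lra.
  + right; left; lra.
  + right; left; lra.
- move=> /Rmin_le_or [/Rmin_le_or [h|h]|/Rmin_le_or [h|h]].
  + left; lra.
  + left; lra.
  + right; left; lra.
  + right; left; lra.
Qed.
End Geo.

Lemma Rabs_max u : Rabs u = Rmax u (- u).
Proof. rewrite /Rabs /Rmax; case: Rcase_abs; case: Rle_dec; lra. Qed.

Section Share.
Variables (V E : finType) (src tgt : E -> V) (len : E -> R).
Notation pdist := (Defs.dist src tgt len).
Notation dV' := (dV src tgt len).

Lemma dist_fexp e p : exists g, forall t, pdist (PE e t) p = feval g t.
Proof.
case: p => [v|f s].
  exists (Min (Aff 1 (dV' (src e) v)) (Aff (-1) (len e + dV' (tgt e) v))) => t.
  rewrite /Defs.dist /=; f_equal; ring.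
pose m := Min (Min (Aff 1 (dV' (src e) (src f) + s)) (Aff 1 (dV' (src e) (tgt f) + (len f - s))))
              (Min (Aff (-1) (len e + dV' (tgt e) (src f) + s)) (Aff (-1) (len e + dV' (tgt e) (tgt f) + (len f - s)))).
have hm : forall t, feval m t =
   Rmin (Rmin (t + dV' (src e) (src f) + s) (t + dV' (src e) (tgt f) + (len f - s)))
        (Rmin (len e - t + dV' (tgt e) (src f) + s) (len e - t + dV' (tgt e) (tgt f) + (len f - s))).
  by move=> t /=; f_equal; f_equal; ring.
rewrite /Defs.dist; case: (e == f).
- exists (Min (Max (Aff 1 (- s)) (Aff (-1) s)) m) => t.
  change (feval (Min (Max (Aff 1 (-s)) (Aff (-1) s)) m) t) with
    (Rmin (Rmax (1 * t + - s) (-1 * t + s)) (feval m t)).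
  rewrite hm Rabs_max; f_equal; f_equal; ring.
- by exists m => t; rewrite hm.
Qed.

Lemma pt_on_int e t : 0 < t < len e -> pt_on src tgt len e t = PE e t.
Proof. move=> h; rewrite /pt_on; do 2! case: Req_EM_T => ?; try lra; done. Qed.

Variable n : nat.

Definition shareG (x : 'I_n -> point V E) k (b : 'I_n * 'I_n -> bool) : R :=
     if [forall l, b (k, l)] then
       / INR (size (undup [seq x j | j <- enum 'I_n & [forall l, b (j, l)]])) * / INR (nb_at x (x k))
     else 0.

Lemma share_bits (x : 'I_n -> point V E) k z :
  share src tgt len x k z =
  shareG x k (fun jk => Rleb (pdist z (x jk.1)) (pdist z (x jk.2))).
Proof. reflexivity. Qed.

Lemma share_PC (x : 'I_n -> point V E) k e :
  exists P, PC 0 (len e) P (fun t => share src tgt len x k (pt_on src tgt len e t)).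
Proof.
have [P HP] : exists P, PC 0 (len e) P
   (fun t (jk : 'I_n * 'I_n) => Rleb (pdist (PE e t) (x jk.1)) (pdist (PE e t) (x jk.2))).
  apply: (PC_fun (f := fun (jk : 'I_n * 'I_n) t => Rleb (pdist (PE e t) (x jk.1)) (pdist (PE e t) (x jk.2)))).
  move=> jk; have [g1 H1] := dist_fexp e (x jk.1); have [g2 H2] := dist_fexp e (x jk.2).
  have [P HP] := fexp_PC 0 (len e) g1 g2; exists P.
  apply: PC_ext HP => t _; by rewrite H1 H2.
exists P; apply: PC_ext (@PC_map _ _ 0 (len e) P _ (shareG x k) HP) => t ht.
by rewrite pt_on_int // share_bits.
Qed.

Lemma share_integ (x : 'I_n -> point V E) k e :
  integ (fun t => share src tgt len x k (pt_on src tgt len e t)) 0 (len e) \/ len e < 0.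
Proof.
case: (Rle_dec 0 (len e)) => h; last by right; lra.
left; have [P HP] := share_PC x k e; exact: PC_integ h HP.
Qed.
End Share.

Section Sums.
Variable I : Type.
Implicit Types (r : seq I) (F G : I -> R).

Lemma sumR_add r F G : \big[Rplus/0]_(i <- r) (F i + G i) =
  \big[Rplus/0]_(i <- r) F i + \big[Rplus/0]_(i <- r) G i.
Proof. elim: r => [|a r IH]; rewrite ?big_nil ?big_cons ?IH; ring. Qed.

Lemma sumR_scal r F c : \big[Rplus/0]_(i <- r) (c * F i) = c * \big[Rplus/0]_(i <- r) F i.
Proof. elim: r => [|a r IH]; rewrite ?big_nil ?big_cons ?IH; ring. Qed.

Lemma sumR_cst r c : \big[Rplus/0]_(i <- r) c = INR (size r) * c.
Proof.
elim: r => [|a r IH]; first by rewrite big_nil /=; ring.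
have -> : size (a :: r) = S (size r) by [].
rewrite big_cons IH S_INR; ring.
Qed.

Lemma sumR_le r F G : (forall i, F i <= G i) ->
  \big[Rplus/0]_(i <- r) F i <= \big[Rplus/0]_(i <- r) G i.
Proof.
move=> H; elim: r => [|a r IH]; rewrite ?big_nil ?big_cons; first lra.
have := H a; lra.
Qed.

Lemma sumR_ge0 r F : (forall i, 0 <= F i) -> 0 <= \big[Rplus/0]_(i <- r) F i.
Proof.
move=> H; elim: r => [|a r IH]; rewrite ?big_nil ?big_cons; first lra.
have := H a; lra.
Qed.
End Sums.

Lemma sumR_exchange (I J : Type) (r : seq I) (s : seq J) (F : I -> J -> R) :
  \big[Rplus/0]_(i <- r) \big[Rplus/0]_(j <- s) F i j =
  \big[Rplus/0]_(j <- s) \big[Rplus/0]_(i <- r) F i j.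
Proof.
elim: r => [|a r IH].
  rewrite big_nil; under eq_bigr do rewrite big_nil.
  rewrite sumR_cst; ring.
by rewrite big_cons IH -sumR_add; apply: eq_bigr => j _; rewrite big_cons.
Qed.

Lemma sumR_ge_mem (T : eqType) (r : seq T) (F : T -> R) y :
  (forall i, 0 <= F i) -> y \in r -> F y <= \big[Rplus/0]_(i <- r) F i.
Proof.
move=> H; elim: r => [//|a r IH]; rewrite in_cons big_cons => /orP [/eqP ->|hy].
  have := sumR_ge0 r H; lra.
have := IH hy; have := H a; lra.
Qed.

Lemma integ_sum (T : Type) (r : seq T) (F : T -> R -> R) a b :
  (forall y, integ (F y) a b) ->
  integ (fun t => \big[Rplus/0]_(y <- r) F y t) a b /\
  RInt (fun t => \big[Rplus/0]_(y <- r) F y t) a b = \big[Rplus/0]_(y <- r) RInt (F y) a b.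
Proof.
move=> H; elim: r => [|c r [IH1 IH2]].
  have -> : (fun t => \big[Rplus/0]_(y <- [::]) F y t) = (fun _ => 0).
    by apply: functional_extensionality => t; rewrite big_nil.
  by rewrite big_nil RInt_cst; split; [exact: integ_cst | ring].
have -> : (fun t => \big[Rplus/0]_(y <- c :: r) F y t) =
          (fun t => F c t + \big[Rplus/0]_(y <- r) F y t).
  by apply: functional_extensionality => t; rewrite big_cons.
split; first exact: integ_add.
by rewrite RInt_add // big_cons IH2.
Qed.

Definition Ind (eps c t : R) : R := if Rleb (Rabs (t - c)) eps then 1 else 0.

Lemma Ind_ge0 eps c t : 0 <= Ind eps c t.
Proof. rewrite /Ind; case: Rleb; lra. Qed.

Lemma Ind_integ eps c L : 0 <= L -> integ (Ind eps c) 0 L.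
Proof.
move=> hL; have [P HP] := fexp_PC 0 L (Max (Aff 1 (- c)) (Aff (-1) c)) (Aff 0 eps).
apply: (PC_integ (P := P)) => //.
apply: PC_ext (@PC_map _ _ 0 L P _ (fun b : bool => if b then 1 else 0) HP) => t _.
rewrite /Ind /= Rabs_max.
have -> : 1 * t + - c = t - c by ring.
have -> : -1 * t + c = - (t - c) by ring.
by have -> : 0 * t + eps = eps by ring.
Qed.

Lemma Rmax_or a b : Rmax a b = a \/ Rmax a b = b.
Proof. rewrite /Rmax; case: Rle_dec; tauto. Qed.
Lemma Rmin_or a b : Rmin a b = a \/ Rmin a b = b.
Proof. rewrite /Rmin; case: Rle_dec; tauto. Qed.

Lemma Ind_zero eps c t : eps < Rabs (t - c) -> Ind eps c t = 0.
Proof. by move=> h; rewrite /Ind; move/Rleb_false: h => ->. Qed.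

Lemma Ind_int_bound eps c L : 0 < eps -> 0 <= L -> RInt (Ind eps c) 0 L <= 2 * eps.
Proof.
move=> he hL.
pose m1 := Rmin L (c - eps).
pose u := Rmax 0 m1.
pose m2 := Rmin L (c + eps).
pose v := Rmax u m2.
have f1 := Rmin_l L (c - eps); have f2 := Rmin_r L (c - eps); have f3 := Rmin_or L (c - eps).
have f4 := Rmin_l L (c + eps); have f5 := Rmin_r L (c + eps); have f6 := Rmin_or L (c + eps).
have f7 := Rmax_l 0 m1; have f8 := Rmax_r 0 m1; have f9 := Rmax_or 0 m1.
have f10 := Rmax_l u m2; have f11 := Rmax_r u m2; have f12 := Rmax_or u m2.
rewrite -/m1 -/m2 in f1 f2 f3 f4 f5 f6; rewrite -/u in f7 f8 f9; rewrite -/v in f10 f11 f12.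
have hu : 0 <= u <= L by case: f3 => ?; case: f9 => ?; lra.
have hv : u <= v <= L by case: f6 => ?; case: f12 => ?; lra.
have [I1 [I2 E1]] := @RInt_chasles (Ind eps c) 0 u L ltac:(lra) (Ind_integ eps c hL).
have [I3 [I4 E2]] := @RInt_chasles (Ind eps c) u v L ltac:(lra) I2.
rewrite E1 E2.
have B1 : RInt (Ind eps c) 0 u <= 0 * (u - 0).
  apply: RInt_cst_bound; [lra | exact: I1 |].
  move=> t ht; rewrite Ind_zero; first lra.
  rewrite Rabs_left; case: f3 => ?; case: f9 => ?; lra.
have B2 : RInt (Ind eps c) u v <= 1 * (v - u).
  apply: RInt_cst_bound; [lra | exact: I3 |].
  move=> t _; rewrite /Ind; case: Rleb; lra.
have B3 : RInt (Ind eps c) v L <= 0 * (L - v).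
  apply: RInt_cst_bound; [lra | exact: I4 |].
  move=> t ht; rewrite Ind_zero; first lra.
  rewrite Rabs_right; case: f6 => ?; case: f12 => ?; lra.
have : v - u <= 2 * eps by case: f3 => ?; case: f6 => ?; case: f9 => ?; case: f12 => ?; lra.
lra.
Qed.

Lemma posinv_ge0 (a : R) : 0 <= a -> 0 <= / a.
Proof.
move=> h; case: (Req_dec a 0) => [->|ne]; first by rewrite Rinv_0; lra.
apply: Rlt_le; apply: Rinv_0_lt_compat; lra.
Qed.

Section Main.
Variables (V E : finType) (src tgt : E -> V) (len : E -> R) (n : nat).
Variables (x : 'I_n -> point V E) (i j : 'I_n).
Hypothesis Hlen : forall e, 0 < len e.
Hypothesis Hloop : forall e, src e <> tgt e.
Hypothesis Hconn : connected src tgt.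
Hypothesis Hvalid : valid_profile len x.

Notation pdist := (Defs.dist src tgt len).
Notation sh := (share src tgt len).

Definition Ydirs (eps : R) : seq (point V E) :=
  match x i with
  | PV v => [seq ydir src len v f eps | f <- enum E & (src f == v) || (tgt f == v)]
  | PE e0 s0 => [:: PE e0 (s0 - eps); PE e0 (s0 + eps)]
  end.

Definition good (eps : R) : Prop :=
  0 < eps /\ (forall f, eps < len f) /\
  (forall e0 s0, x i = PE e0 s0 -> eps < s0 /\ eps < len e0 - s0) /\
  (forall k, x k \notin Ydirs eps).

Definition cfun (e : E) : R :=
  match x i with PE e0 s0 => if e == e0 then s0 else 0 | _ => 0 end.

Lemma Y_valid eps : good eps -> forall y, y \in Ydirs eps -> valid_point len y.
Proof.
move=> [he [hf [hi _]]] y; rewrite /Ydirs.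
case E0: (x i) => [v|e0 s0].
- move=> /mapP [f _ ->]; rewrite /ydir; case: (src f == v) => /=; have := hf f; lra.
- have [h1 h2] := hi e0 s0 E0.
  rewrite !inE => /orP [/eqP ->|/eqP ->] /=; lra.
Qed.

Lemma Y_size eps : size (Ydirs eps) = degree src tgt (x i).
Proof.
rewrite /Ydirs /degree; case: (x i) => [v|e0 s0] //.
rewrite /vdeg size_map cardE /enum_mem -filter_predI; congr size; apply: eq_filter => e /=.
by rewrite !inE andbT.
Qed.

Lemma Y_geo eps e t : good eps -> 0 < t < len e -> eps < pdist (PE e t) (x i) ->
  exists2 y, y \in Ydirs eps & pdist (PE e t) y + eps <= pdist (PE e t) (x i).
Proof.
move=> [he _] ht; rewrite /Ydirs; case: (x i) => [v|e0 s0] hD.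
- have [f [hf H]] := geo_vertex Hlen Hconn Hloop ht he hD.
  exists (ydir src len v f eps) => //; apply: map_f; by rewrite mem_filter hf mem_enum.
- case: (geo_int ht he hD) => H.
  + by exists (PE e0 (s0 - eps)); rewrite ?inE ?eqxx.
  + by exists (PE e0 (s0 + eps)); rewrite ?inE ?eqxx ?orbT.
Qed.

Lemma Ind_one eps c t : Rabs (t - c) <= eps -> Ind eps c t = 1.
Proof. by move=> h; rewrite /Ind; move/Rleb_iff: h => ->. Qed.

Lemma Y_near eps e t : 0 < t < len e -> pdist (PE e t) (x i) <= eps ->
  1 <= Ind eps 0 t + Ind eps (len e) t + Ind eps (cfun e) t.
Proof.
move=> ht hD.
have g1 := Ind_ge0 eps 0 t; have g2 := Ind_ge0 eps (len e) t; have g3 := Ind_ge0 eps (cfun e) t.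
have H : t <= eps \/ len e - t <= eps \/ Rabs (t - cfun e) <= eps.
  move: hD; rewrite /cfun; case E0: (x i) => [v|e0 s0] hD.
  - have := near_vertex Hlen Hconn hD; tauto.
  - have vs : 0 < s0 < len e0 by have := Hvalid i; rewrite E0.
    case: (near_int Hlen Hconn vs hD) => [h|[h|[E1 h]]]; [by left|by right; left|].
    by right; right; rewrite E1 eqxx.
case: H => [h|[h|h]].
- rewrite (Ind_one (c := 0)); first lra. rewrite Rminus_0_r Rabs_right; lra.
- rewrite (Ind_one (c := len e)); first lra. rewrite Rabs_left1; lra.
- rewrite (Ind_one (c := cfun e)) //; lra.
Qed.

Lemma share_ge0 (x' : 'I_n -> point V E) k z : 0 <= sh x' k z.
Proof.
rewrite /share; case: closest; last lra.
apply: Rmult_le_pos; apply: posinv_ge0; exact: pos_INR.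
Qed.

Lemma new_share y z : (forall k, x k != y) -> closest src tgt len x z i ->
  pdist z y < pdist z (x i) -> sh (upd x j y) j z = 1.
Proof.
move=> Hy Hc Hlt.
set x' := upd x j y.
have x'j : x' j = y by rewrite /x' /upd eqxx.
have x'k : forall k, k != j -> x' k = x k by move=> k hk; rewrite /x' /upd (negbTE hk).
have hi : forall k, pdist z (x i) <= pdist z (x k).
  by move=> k; move/forallP: Hc => /(_ k) /Rleb_iff.
have cj : closest src tgt len x' z j.
  apply/forallP => k; apply/Rleb_iff; rewrite x'j.
  case: (eqVneq k j) => [->|hk]; first by rewrite x'j; lra.
  rewrite x'k //; have := hi k; lra.
have ck : forall k, k != j -> closest src tgt len x' z k = false.
  move=> k hk; apply/negP => /forallP /(_ j) /Rleb_iff; rewrite x'j x'k //.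
  have := hi k; lra.
rewrite /share cj /closest_locs.
have -> : size (undup [seq x' k | k <- enum 'I_n & closest src tgt len x' z k]) = 1%nat.
  have P : perm_eq (undup [seq x' k | k <- enum 'I_n & closest src tgt len x' z k]) (undup [:: y]).
    apply: perm_undup => a; apply/idP/idP.
    - move/mapP => [k]; rewrite mem_filter => /andP [ck' _] ->.
      case: (eqVneq k j) => [->|hk]; first by rewrite x'j inE.
      by rewrite ck in ck'.
    - rewrite inE => /eqP ->; apply/mapP; exists j; last by rewrite x'j.
      by rewrite mem_filter cj mem_enum.
  by rewrite (perm_size P).
have -> : nb_at x' (x' j) = 1%nat.
  rewrite /nb_at; apply: (eq_card1 (x := j)) => k; rewrite !inE x'j.
  case: (eqVneq k j) => [->|hk]; first by rewrite x'j !eqxx.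
  by rewrite x'k // (negbTE (Hy k)).
rewrite /= Rinv_1; ring.
Qed.

Hypothesis Hbal : balanced src tgt x i.

Lemma pointwise eps e t : good eps -> 0 < t < len e ->
  INR (degree src tgt (x i)) * sh x i (PE e t) <=
  \big[Rplus/0]_(y <- Ydirs eps) sh (upd x j y) j (PE e t) +
  (Ind eps 0 t + Ind eps (len e) t + Ind eps (cfun e) t).
Proof.
move=> Hg ht.
have S0 : 0 <= \big[Rplus/0]_(y <- Ydirs eps) sh (upd x j y) j (PE e t).
  apply: sumR_ge0 => y; exact: share_ge0.
have g1 := Ind_ge0 eps 0 t; have g2 := Ind_ge0 eps (len e) t; have g3 := Ind_ge0 eps (cfun e) t.
case Hc: (closest src tgt len x (PE e t) i); last first.
  have h0 : sh x i (PE e t) = 0 by rewrite /share Hc.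
  rewrite h0 Rmult_0_r; lra.
suff [H1 H2] : INR (degree src tgt (x i)) * sh x i (PE e t) <= 1 /\ 1 <= \big[Rplus/0]_(y <- Ydirs eps) sh (upd x j y) j (PE e t) +
  (Ind eps 0 t + Ind eps (len e) t + Ind eps (cfun e) t) by lra.
split.
- rewrite /share Hc -Hbal.
  have hmem : x i \in closest_locs src tgt len x (PE e t).
    by rewrite mem_undup; apply: map_f; rewrite mem_filter Hc mem_enum.
  have hsz : (1 <= size (closest_locs src tgt len x (PE e t)))%nat.
    by case: (closest_locs src tgt len x (PE e t)) hmem.
  have hd : (1 <= nb_at x (x i))%nat.
    by rewrite /nb_at; apply/card_gt0P; exists i; rewrite inE.
  have Hsz : 1 <= INR (size (closest_locs src tgt len x (PE e t))).
    by apply: (le_INR 1); apply/leP.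
  have Hd : 1 <= INR (nb_at x (x i)) by apply: (le_INR 1); apply/leP.
  have -> : INR (nb_at x (x i)) * (/ INR (size (closest_locs src tgt len x (PE e t))) * / INR (nb_at x (x i)))
       = / INR (size (closest_locs src tgt len x (PE e t))) by field; lra.
  rewrite -Rinv_1; apply: Rinv_le_contravar => //; lra.
- case: (Rle_dec (pdist (PE e t) (x i)) eps) => hD.
    have := Y_near ht hD; lra.
  have [y hy Hy] := Y_geo Hg ht (Rnot_le_lt _ _ hD).
  have Hg' := Hg; case: Hg' => [he [_ [_ Hnot]]].
  have H1 : sh (upd x j y) j (PE e t) = 1.
    apply: new_share => //; last lra.
    move=> k; apply/eqP => E1; have := Hnot k; by rewrite E1 hy.
  have h : sh (upd x j y) j (PE e t) <= \big[Rplus/0]_(y <- Ydirs eps) sh (upd x j y) j (PE e t)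
    := @sumR_ge_mem _ (Ydirs eps) (fun y => sh (upd x j y) j (PE e t)) y (fun y => share_ge0 _ _ _) hy.
  rewrite H1 in h; lra.
Qed.

Lemma sh_integ (x' : 'I_n -> point V E) k e :
  integ (fun t => sh x' k (pt_on src tgt len e t)) 0 (len e).
Proof.
have [P HP] := share_PC src tgt len x' k e; apply: PC_integ HP; have := Hlen e; lra.
Qed.

Lemma edge_ineq eps e : good eps ->
  INR (degree src tgt (x i)) * RInt (fun t => sh x i (pt_on src tgt len e t)) 0 (len e) <=
  \big[Rplus/0]_(y <- Ydirs eps) RInt (fun t => sh (upd x j y) j (pt_on src tgt len e t)) 0 (len e)
  + 6 * eps.
Proof.
move=> Hg; have he : 0 < eps by case: Hg.
have hL : 0 <= len e by have := Hlen e; lra.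
rewrite -RInt_scal; last exact: sh_integ.
have [IS RS] := @integ_sum _ (Ydirs eps) (fun y t => sh (upd x j y) j (pt_on src tgt len e t)) 0 (len e)
   (fun y => sh_integ _ _ _).
have I0 := Ind_integ eps 0 hL; have IL := Ind_integ eps (len e) hL; have Ic := Ind_integ eps (cfun e) hL.
have I01 := integ_add I0 IL; have I012 := integ_add I01 Ic.
apply: Rle_trans (RInt_le (g := fun t => \big[Rplus/0]_(y <- Ydirs eps) sh (upd x j y) j (pt_on src tgt len e t) +
          ((Ind eps 0 t + Ind eps (len e) t) + Ind eps (cfun e) t)) hL _ _ _) _.
- exact: integ_scal (sh_integ _ _ _).
- exact: integ_add IS I012.
- move=> t ht; rewrite !pt_on_int //.
  have := pointwise Hg ht; lra.
rewrite RInt_add // RS RInt_add // RInt_add //.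
have := Ind_int_bound 0 he hL; have := Ind_int_bound (len e) he hL; have := Ind_int_bound (cfun e) he hL.
lra.
Qed.

Hypothesis Hnash : forall y, valid_point len y ->
  payoff src tgt len (upd x j y) j <= payoff src tgt len x j.

Lemma total eps : good eps ->
  INR (degree src tgt (x i)) * payoff src tgt len x i <=
  INR (degree src tgt (x i)) * payoff src tgt len x j + INR (size (index_enum E)) * (6 * eps).
Proof.
move=> Hg; rewrite /payoff -sumR_scal.
apply: Rle_trans (sumR_le _ (fun e => edge_ineq e Hg)) _.
rewrite sumR_add sumR_cst sumR_exchange.
suff : \big[Rplus/0]_(y <- Ydirs eps) \big[Rplus/0]_(e <- index_enum E)
         RInt (fun t => sh (upd x j y) j (pt_on src tgt len e t)) 0 (len e)
       <= INR (degree src tgt (x i)) * payoff src tgt len x j by rewrite /payoff; lra.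
rewrite -(Y_size eps) -sumR_cst.
have := Y_valid Hg; elim: (Ydirs eps) => [|y r IH] hv; first by rewrite !big_nil; lra.
rewrite !big_cons.
have h1 := Hnash (hv y (mem_head _ _)); rewrite /payoff in h1.
have hv' : forall z, z \in r -> valid_point len z by move=> z hz; apply: hv; rewrite in_cons hz orbT.
have := IH hv'; rewrite /payoff; lra.
Qed.
End Main.

Lemma inP (T : eqType) (a : T) (s : seq T) : a \in s -> List.In a s.
Proof. elim: s => [//|b s IH]; rewrite in_cons => /orP [/eqP ->|h]; [by left | right; exact: IH]. Qed.

Definition posmin (eta : R) (l : list R) : R :=
  List.fold_right (fun b m => if Rlt_dec 0 b then Rmin b m else m) eta l.

Lemma posmin_pos eta l : 0 < eta -> 0 < posmin eta l.
Proof.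
move=> h; elim: l => [//|b l IH]; rewrite /posmin /= -/(posmin eta l); case: Rlt_dec => // hb /=.
rewrite /Rmin; case: Rle_dec => _; lra.
Qed.

Lemma posmin_le eta l : posmin eta l <= eta.
Proof.
elim: l => [|b l IH]; first by rewrite /posmin /=; lra.
rewrite /posmin /= -/(posmin eta l).
case: Rlt_dec => // hb /=.
have := Rmin_r b (posmin eta l); lra.
Qed.

Lemma posmin_lb eta l b : List.In b l -> 0 < b -> posmin eta l <= b.
Proof.
elim: l => [//|c l IH]; rewrite /posmin /= -/(posmin eta l) => -[->|h] hb.
  by case: Rlt_dec => // _ /=; exact: Rmin_l.
case: Rlt_dec => _ /=; last exact: IH.
have := Rmin_r c (posmin eta l); have := IH h hb; lra.
Qed.

Section Choose.
Variables (V E : finType) (src tgt : E -> V) (len : E -> R) (n : nat).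
Variables (x : 'I_n -> point V E) (i j : 'I_n).
Hypothesis Hlen : forall e, 0 < len e.
Hypothesis Hvalid : valid_profile len x.

Definition cw : R := match x i with PE _ s0 => s0 | _ => 0 end.
Definition Bk (p : point V E) : list R :=
  match p with PE f s => (s :: (len f - s) :: (s - cw) :: (cw - s) :: nil)%list | _ => nil end.
Definition Bw : list R :=
  match x i with PE e0 s0 => (s0 :: (len e0 - s0) :: nil)%list | _ => nil end.
Definition Ball : list R :=
  (Bw ++ List.map len (enum E) ++ List.flat_map (fun k => Bk (x k)) (enum 'I_n))%list.

Lemma good_ex eta : 0 < eta -> exists eps, eps <= eta /\ good src tgt len x i eps.
Proof.
move=> heta; pose eps := posmin eta Ball / 2.
have hp := posmin_pos Ball heta; have hle := posmin_le eta Ball.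
have Blt : forall b, List.In b Ball -> 0 < b -> eps < b.
  move=> b hb h; have := posmin_lb eta hb h; rewrite /eps; lra.
have Bne : forall b, List.In b Ball -> b <> eps.
  move=> b hb; case: (Rlt_le_dec 0 b) => h; [have := Blt b hb h | rewrite /eps]; lra.
have inBk : forall k b, List.In b (Bk (x k)) -> List.In b Ball.
  move=> k b hb; apply: List.in_or_app; right; apply: List.in_or_app; right.
  apply/List.in_flat_map; exists k; split => //; apply: inP; exact: mem_enum.
exists eps; split; first by rewrite /eps; lra.
split; first by rewrite /eps; lra.
split.
  move=> f; apply: Blt (Hlen f).
  apply: List.in_or_app; right; apply: List.in_or_app; left; apply: List.in_map; apply: inP; exact: mem_enum.
split.
  move=> e0 s0 E0; have := Hvalid i; rewrite E0 /= => hv.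
  have h1 : List.In s0 Ball by apply: List.in_or_app; left; rewrite /Bw E0; left.
  have h2 : List.In (len e0 - s0) Ball by apply: List.in_or_app; left; rewrite /Bw E0; right; left.
  split; [apply: Blt h1 _ | apply: Blt h2 _]; lra.
move=> k; apply/negP; rewrite /Ydirs.
have hcw : forall e0 s0, x i = PE e0 s0 -> cw = s0 by move=> e0 s0 E0; rewrite /cw E0.
case E0: (x i) => [v|e0 s0].
- move/mapP => [f _]; rewrite /ydir; case: (src f == v) => Ek.
  + by apply: (Bne eps) => //; apply: (inBk k); rewrite Ek /=; left.
  + apply: (Bne (len f - (len f - eps))); last ring.
    by apply: (inBk k); rewrite Ek /=; right; left.
- rewrite !inE => /orP [/eqP Ek|/eqP Ek].
  + apply: (Bne (cw - (s0 - eps))); last by rewrite (hcw _ _ E0); ring.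
    by apply: (inBk k); rewrite Ek /=; right; right; right; left.
  + apply: (Bne ((s0 + eps) - cw)); last by rewrite (hcw _ _ E0); ring.
    by apply: (inBk k); rewrite Ek /=; right; right; left.
Qed.
End Choose.

Local Close Scope R_scope.
Theorem mainTheorem7 (V E : finType) (src tgt : E -> V) (len : E -> R)
  (n : nat) (x : 'I_n -> point V E) (i : 'I_n) :
  network src tgt len ->
  (2 <= n)%N ->
  nash src tgt len x ->
  balanced src tgt x i ->
  forall j : 'I_n, (payoff src tgt len x i <= payoff src tgt len x j)%R.
Proof.
move=> [Hlen [Hloop [_ [Hconn _]]]] _ [Hvalid Hdev] Hbal j.
Local Open Scope R_scope.
set d := INR (degree src tgt (x i)).
have hd : 1 <= d.
  rewrite /d -Hbal; apply: (le_INR 1); apply/leP.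
  by rewrite /nb_at; apply/card_gt0P; exists i; rewrite inE.
set C := INR (size (index_enum E)).
have hC : 0 <= C by exact: pos_INR.
case: (Rle_dec (payoff src tgt len x i) (payoff src tgt len x j)) => // hn.
exfalso.
pose delta := d * (payoff src tgt len x i - payoff src tgt len x j).
have hdel : 0 < delta by rewrite /delta; apply: Rmult_lt_0_compat; lra.
pose eta := delta / (12 * (C + 1)).
have heta : 0 < eta by rewrite /eta; apply: Rdiv_lt_0_compat; lra.
have [eps [heps Hg]] := good_ex src tgt i Hlen Hvalid heta.
have Ht := total Hlen Hloop Hconn Hvalid Hbal (fun y hy => Hdev j y hy) Hg.
have he : 0 < eps by case: Hg.
have k1 : C * (6 * eps) <= C * (6 * eta) by apply: Rmult_le_compat_l => //; lra.
have k2 : C * (6 * eta) <= delta / 2.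
  rewrite /eta; apply: (Rmult_le_reg_r (2 * (C + 1))); first lra.
  have -> : C * (6 * (delta / (12 * (C + 1)))) * (2 * (C + 1)) = C * delta by field; lra.
  have -> : delta / 2 * (2 * (C + 1)) = delta * (C + 1) by field.
  nra.
have ed : delta = d * payoff src tgt len x i - d * payoff src tgt len x j by rewrite /delta; ring.
rewrite -/d -/C in Ht; lra.
Qed.
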